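(* Let $t>0$, $0<t_{sc}<t$, $t_{ave}>0$, $c>0$, $d\in(0,1)$, and let $\Gamma:[0,1]\to(0,\infty)$ satisfy $\Gamma(d)>c$. Let $\eta$, $\zeta$ and $\Delta\pi$ be the transmission efficiency, service integrity and cooperation margin defined in the context. Then $$\Delta\pi=1-\frac{d}{(1-\zeta)\,(1-c/\Gamma(d))},$$ $$\Delta\pi=1-\frac{1-(1-d)\exp\!\left(-\frac{t_{sc}}{t_{ave}}\frac{1}{1-\eta}\right)}{1-c/\Gamma(d)},$$ $$\zeta=1-\frac{d}{1-(1-d)\exp\!\left(-\frac{t_{sc}}{t_{ave}}\frac{1}{1-\eta}\right)}.$$
   Context: The transmission efficiency is $\eta=1-t_{sc}/t$. Service integrity: the service duration $T$ is exponentially distributed with mean $t_{ave}$, and the number of rounds is $M=\lceil T/t\rceil$. The service integrity is $$\zeta=\sum_{m=1}^\infty(1-d)^m\Pr(M=m).$$ Cooperation margin: - The continuation probability is $w=\exp(-t/t_{ave})$. - The trial time $\tau\in(0,t)$ and price $p$ satisfy $p=\Gamma(d)(1-\tau/t)+\frac{c}{1-d}\frac{\tau}{t}$. - The SP's long-term payoffs against a cooperating client are $$\Pi_s^{\mathrm{C}}=\frac{(1-d)(p-c)t-dc\tau}{1-(1-d)w}$$ when the SP cooperates, and $$\Pi_s^{\mathrm{D}}=(1-d)pt-c\tau$$ when the SP always defects. - The cooperation margin is $\Delta\pi=1-\Pi_s^{\mathrm D}/\Pi_s^{\mathrm C}$. *)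

(* Defs.v *)
From HB Require Import structures.
From mathcomp Require Import all_boot all_order all_algebra.
From mathcomp Require Import all_classical all_reals all_analysis.
Set Implicit Arguments. Unset Strict Implicit. Unset Printing Implicit Defensive.
Import Order.TTheory GRing.Theory Num.Theory.
Local Open Scope classical_set_scope.
Local Open Scope ring_scope.

Section defs.
Context {R : realType}.

Definition trans_eff (t t_sc : R) : R := 1 - t_sc / t.

(* Pr(M = m) where M = ceil(T / t) and T ~ Exponential with mean t_ave
   (rate 1/t_ave), using the library's exponential probability measure
   (an extended real). *)
Definition prM (t t_ave : R) (m : nat) : \bar R :=
  exponential_prob (t_ave^-1) [set x : R | Num.ceil (x / t) = (m%:Z)%R].

Definition service_integrity (t t_ave d : R) : R :=
  fine (\sum_(1 <= m <oo) (((1 - d) ^+ m)%:E * prM t t_ave m))%E.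

Definition cont_prob (t t_ave : R) : R := expR (- (t / t_ave)).

Definition Pi_C (t t_ave c d p tau : R) : R :=
  ((1 - d) * (p - c) * t - d * c * tau) / (1 - (1 - d) * cont_prob t t_ave).

Definition Pi_D (t c d p tau : R) : R := (1 - d) * p * t - c * tau.

Definition coop_margin (t t_ave c d p tau : R) : R :=
  1 - Pi_D t c d p tau / Pi_C t t_ave c d p tau.

End defs.

(* Main.v *)
Require Import Defs.
From HB Require Import structures.
From mathcomp Require Import all_boot all_order all_algebra.
From mathcomp Require Import all_classical all_reals all_analysis.
From mathcomp Require Import measurable_realfun lebesgue_integral ftc exponential_distribution.
From mathcomp Require Import ring lra.
Import numFieldTopology.Exports.
Local Open Scope classical_set_scope.
Import Order.TTheory GRing.Theory Num.Theory.
Local Open Scope ring_scope.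

Lemma exp_prob_oc (R : realType) (r a b : R) : 0 < r -> 0 <= a -> a < b ->
  exponential_prob r `]a, b] = (expR (- r * a) - expR (- r * b))%:E.
Proof.
move=> r0 a0 ab.
rewrite /exponential_prob integral_itv_obnd_cbnd; last first.
  apply/measurable_EFinP; apply: measurable_funS (measurable_exponential_pdf r) => //.
have cexpNM : continuous (fun z : R^o => expR (- r * z)).
  move=> z; apply: continuous_comp; last exact: continuous_expR.
  by apply: continuousM => //; apply: (@continuousN _ R^o); exact: cst_continuous.
rewrite (@continuous_FTC2 _ _ (fun x => - expR (- r * x))) //.
- by rewrite -EFinB opprK addrC.
- apply: (@continuous_subspaceW R^o _ _ [set` `[0, +oo[%R]).
  + move=> x /=; rewrite !in_itv/= andbT => /andP[ax _]; exact: le_trans ax.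
  + exact: within_continuous_exponential_pdf.
- split.
  + by move=> z _; exact: ex_derive.
  + by apply/cvg_at_right_filter; apply: cvgN; exact: cexpNM.
  + by apply/cvg_at_left_filter; apply: cvgN; exact: cexpNM.
- move=> z; rewrite in_itv/= => /andP[z0 _].
  by apply: derive1_exponential_pdf; rewrite in_itv/= andbT (le_lt_trans a0).
Qed.

Lemma ceil_set (R : realType) (t : R) (n : nat) : 0 < t ->
  [set x : R | Num.ceil (x / t) = (n.+1%:Z)%R] = `](n%:R * t), (n.+1%:R * t)]%classic.
Proof.
move=> t0; apply/seteqP; split => x /=; rewrite in_itv /=.
- move/eqP; rewrite ceil_eq => /andP[h1 h2].
  rewrite -ltr_pdivlMr // -ler_pdivrMr // h2 andbT.
  move: h1; congr (_ < _); rewrite -[n.+1]addn1 PoszD addrK //.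
- move=> /andP[h1 h2]; apply/eqP; rewrite ceil_eq.
  rewrite -[n.+1]addn1 PoszD addrK.
  rewrite ltr_pdivlMr // ler_pdivrMr // -PoszD addn1; exact/andP.
Qed.

Lemma prM_eq (R : realType) (t t_ave : R) (n : nat) : 0 < t -> 0 < t_ave ->
  prM t t_ave n.+1 = (cont_prob t t_ave ^+ n - cont_prob t t_ave ^+ n.+1)%:E.
Proof.
move=> t0 ta0; rewrite /prM ceil_set // exp_prob_oc //.
- rewrite /cont_prob -!expRM_natl; congr (EFin (expR _ - expR _)); ring.
- by rewrite invr_gt0.
- by rewrite mulr_ge0 // ltW.
- by rewrite ltr_pM2r // ltr_nat.
Qed.

Lemma zeta_eq (R : realType) (t t_ave d : R) : 0 < t -> 0 < t_ave -> 0 < d -> d < 1 ->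
  service_integrity t t_ave d =
  (1 - d) * (1 - cont_prob t t_ave) / (1 - (1 - d) * cont_prob t t_ave).
Proof.
move=> t0 ta0 d0 d1.
set w := cont_prob t t_ave.
have w0 : 0 < w by rewrite /w /cont_prob expR_gt0.
have w1 : w < 1 by rewrite /w /cont_prob expR_lt1 oppr_lt0 divr_gt0.
set a := fun m : nat => (1 - d) ^+ m * (w ^+ m.-1 - w ^+ m).
set S := fun n : nat => \sum_(1 <= m < n) a m.
have hS : (fun n => (\sum_(1 <= m < n) (((1 - d) ^+ m)%:E * prM t t_ave m))%E) = fun n => (S n)%:E.
  apply: funext => n; rewrite /S -sumEFin; apply: eq_big_nat => m /andP[m1 _].
  case: m m1 => // m _; rewrite prM_eq // /a /=; by rewrite -EFinM.
have cS : S @ \oo --> (1 - d) * (1 - w) / (1 - (1 - d) * w).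
  rewrite -cvg_shiftS.
  have -> : [sequence S n.+1]_n = series (geometric ((1 - d) * (1 - w)) ((1 - d) * w)).
    apply: funext => n; rewrite /S /= seriesEnat big_add1 /=.
    apply: eq_bigr => k _; rewrite /a /geometric /= exprS exprMn; rewrite [w ^+ k.+1]exprS; rewrite /=; move: ((1 - d) ^+ k) (w ^+ k) => u v; ring.
  apply: cvg_geometric_series.
  rewrite ger0_norm; last by rewrite mulr_ge0 // ?subr_ge0 ltW.
  nra.
rewrite /service_integrity hS.
have -> : limn (fun n => (S n)%:E) = ((1 - d) * (1 - w) / (1 - (1 - d) * w))%:E.
  by apply: cvg_lim => //; apply: cvg_comp cS _. 
by [].
Qed.

Ltac nz := repeat (apply/andP; split); apply/negP => /eqP ?; lra.

Theorem theorem4 (R : realType) (t t_sc t_ave c d : R) (Gamma : R -> R)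
    (tau p : R)
    (ht : 0 < t) (htsc0 : 0 < t_sc) (htsc : t_sc < t) (htave : 0 < t_ave)
    (hc : 0 < c) (hd0 : 0 < d) (hd1 : d < 1)
    (hGamma : forall x : R, 0 <= x <= 1 -> 0 < Gamma x)
    (hGd : c < Gamma d)
    (htau0 : 0 < tau) (htau1 : tau < t)
    (hp : p = Gamma d * (1 - tau / t) + c / (1 - d) * (tau / t)) :
  let eta := trans_eff t t_sc in
  let zeta := service_integrity t t_ave d in
  let dpi := coop_margin t t_ave c d p tau in
  [/\ dpi = 1 - d / ((1 - zeta) * (1 - c / Gamma d)),
      dpi = 1 - (1 - (1 - d) * expR (- (t_sc / t_ave * (1 - eta)^-1)))
                / (1 - c / Gamma d)
    & zeta = 1 - d / (1 - (1 - d) * expR (- (t_sc / t_ave * (1 - eta)^-1)))].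
Proof.
move=> eta zeta dpi.
have hw : expR (- (t_sc / t_ave * (1 - eta)^-1)) = cont_prob t t_ave.
  rewrite /cont_prob /eta /trans_eff; congr (expR _); field.
  nz.
rewrite hw.
set w := cont_prob t t_ave.
have w0 : 0 < w by rewrite /w /cont_prob expR_gt0.
have w1 : w < 1 by rewrite /w /cont_prob expR_lt1 oppr_lt0 divr_gt0.
have q1 : 0 < 1 - (1 - d) * w by nra.
have G0 : 0 < Gamma d by lra.
have hz : zeta = 1 - d / (1 - (1 - d) * w).
  rewrite /zeta zeta_eq // -/w; field; nz.
have hz' : 1 - zeta = d / (1 - (1 - d) * w) by rewrite hz; ring.
have hdpi : dpi = 1 - (1 - (1 - d) * w) / (1 - c / Gamma d).
  rewrite /dpi /coop_margin /Pi_D /Pi_C -/w.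
  have hN : (1 - d) * (p - c) * t - d * c * tau = (1 - d) * (t - tau) * (Gamma d - c).
    rewrite hp; field; nz.
  have hD : (1 - d) * p * t - c * tau = Gamma d * (1 - d) * (t - tau).
    rewrite hp; field; nz.
  rewrite hN hD; congr (_ - _); field.
  nz.
split => //.
rewrite hdpi hz'; congr (_ - _); field.
nz.
Qed.
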